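(* Let $X$ be a real Banach space, $\tau$ the norm or weak topology, and $Y$ a (closed linear) subspace of $X$ such that $(X,Y,\mathcal{F}(X))$ has $\tau$-$\mathscr{F}_{cwm}$-SACP. Then for every $N\in\mathbb{N}$ and every $f:[0,\infty)^N\to[0,\infty)$ in $\mathscr{F}_{cwm}$, the set-valued map $\mathrm{Cent}_Y^f:(\mathcal{F}_N(X),d)\to\mathcal{CB}(Y)$ is metric-$\tau$ upper semicontinuous, i.e., for every $F\in\mathcal{F}_N(X)$ and every $\tau$-open set $W\supseteq\mathrm{Cent}_Y^f(F)$ there is a $d$-open set $U\ni F$ with $\mathrm{Cent}_Y^f(G)\subseteq W$ for all $G\in U$.
   Context: $\mathcal{F}(X)$ is the family of nonempty finite subsets of $X$; $\mathcal{F}_N(X)$ the subsets of cardinality $N$, each written with a fixed enumeration $\{x_1,\dots,x_N\}$, with metric $d(F_1,F_2)=\max_i\|x_i-x_i'\|$. $\mathcal{CB}(Y)$ denotes the closed bounded subsets of $Y$. $\mathscr{F}_{cwm}$ is the class of convex functions $f:[0,\infty)^N\to[0,\infty)$ ($N\in\mathbb{N}$) that are monotone ($a\le b$ coordinatewise implies $f(a)\le f(b)$) and weakly strictly monotone ($a_i<b_i$ for all $i$ implies $f(a)<f(b)$). For $F=\{x_1,\dots,x_N\}$: $r_f(y,F)=f(\|y-x_1\|,\dots,\|y-x_N\|)$, $\mathrm{rad}_Y^f(F)=\inf_{y\in Y}r_f(y,F)$, $\mathrm{Cent}_Y^f(F)=\{y\in Y:r_f(y,F)=\mathrm{rad}_Y^f(F)\}$.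 $(X,Y,\mathcal{F}(X))$ has $\tau$-$\mathscr{F}_{cwm}$-SACP if for every $F\in\mathcal{F}(X)$, every $f\in\mathscr{F}_{cwm}$ on $[0,\infty)^{card(F)}$ and every sequence $(y_n)\subseteq Y$ with $r_f(y_n,F)\to\mathrm{rad}_Y^f(F)$, $(y_n)$ has a $\tau$-convergent subsequence. *)

(* Defs.v *)
From HB Require Import structures.
From mathcomp Require Import all_boot all_order all_algebra.
From mathcomp Require Import all_classical all_reals all_analysis.
Set Implicit Arguments. Unset Strict Implicit. Unset Printing Implicit Defensive.
Import Order.TTheory GRing.Theory Num.Theory.
Import numFieldNormedType.Exports.
Local Open Scope classical_set_scope.
Local Open Scope ring_scope.

Section Defs.
Variable R : realType.

Definition nonneg_vec (N : nat) (a : 'I_N -> R) := forall i, 0 <= a i.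

Definition in_Fcwm (N : nat) (f : ('I_N -> R) -> R) : Prop :=
  (forall a, nonneg_vec a -> 0 <= f a) /\
  (forall a b (t : R), nonneg_vec a -> nonneg_vec b -> 0 <= t -> t <= 1 ->
     f (fun i => t * a i + (1 - t) * b i) <= t * f a + (1 - t) * f b) /\
  (forall a b, nonneg_vec a -> nonneg_vec b ->
     (forall i, a i <= b i) -> f a <= f b) /\
  (forall a b, nonneg_vec a -> nonneg_vec b ->
     (forall i, a i < b i) -> f a < f b).

Variable X : normedModType R.

(* ---- Finite sets with a fixed enumeration: injective maps 'I_N -> X ---- *)
Definition is_enum (N : nat) (F : 'I_N -> X) : Prop := injective F.

Definition dist_enum (N : nat) (F G : 'I_N -> X) : R :=
  \big[Num.max/0]_(i < N) `|F i - G i|.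

Definition r_f (N : nat) (f : ('I_N -> R) -> R) (F : 'I_N -> X) (y : X) : R :=
  f (fun i => `|y - F i|).

Definition rad (Y : set X) (N : nat) (f : ('I_N -> R) -> R) (F : 'I_N -> X) : R :=
  inf [set r_f f F y | y in Y].

Definition Cent (Y : set X) (N : nat) (f : ('I_N -> R) -> R) (F : 'I_N -> X)
  : set X := [set y | Y y /\ r_f f F y = rad Y f F].

Definition closed_subspace (Y : set X) : Prop :=
  closed Y /\ Y 0 /\ (forall (a : R) x y, Y x -> Y y -> Y (a *: x + y)).

Definition cont_lin_functional (g : X -> R) : Prop :=
  (forall (a : R) x y, g (a *: x + y) = a * g x + g y) /\ continuous g.

Definition weak_open (W : set X) : Prop :=
  forall x, W x -> exists (k : nat) (g : 'I_k -> X -> R) (e : R),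
    (forall i, cont_lin_functional (g i)) /\ 0 < e /\
    (forall y, (forall i, `|g i y - g i x| < e) -> W y).

End Defs.

Inductive tau_kind := NormTop | WeakTop.

Section Tau.
Variable R : realType.
Variable X : normedModType R.

Definition tau_open (tau : tau_kind) (W : set X) : Prop :=
  match tau with
  | NormTop => open W
  | WeakTop => weak_open W
  end.

Definition tau_cvg (tau : tau_kind) (u : nat -> X) (x : X) : Prop :=
  forall W, tau_open tau W -> W x -> exists n0, forall n, (n0 <= n)%N -> W (u n).

Definition SACP (tau : tau_kind) (Y : set X) : Prop :=
  forall (N : nat) (F : 'I_N -> X) (f : ('I_N -> R) -> R) (u : nat -> X),
    (0 < N)%N -> is_enum F -> in_Fcwm f -> (forall n, Y (u n)) ->
    (fun n => r_f f F (u n)) @ \oo --> rad Y f F ->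
    exists (phi : nat -> nat) (x : X),
      {homo phi : m n / (m < n)%N >-> (m < n)%N} /\ tau_cvg tau (u \o phi) x.

Definition d_open (N : nat) (U : set ('I_N -> X)) : Prop :=
  forall G, U G -> exists e : R, 0 < e /\
    forall G', is_enum G' -> dist_enum G G' < e -> U G'.

Definition Cent_usc (tau : tau_kind) (Y : set X) (N : nat) (f : ('I_N -> R) -> R)
  : Prop :=
  forall F, is_enum F -> forall W, tau_open tau W -> Cent Y f F `<=` W ->
    exists U : set ('I_N -> X), d_open U /\ U F /\ (forall G, U G -> is_enum G) /\
      forall G, U G -> Cent Y f G `<=` W.
End Tau.

(* Main.v *)
Require Import Defs.
From HB Require Import structures.
From mathcomp Require Import all_boot all_order all_algebra.
From mathcomp Require Import all_classical all_reals all_analysis.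
From mathcomp Require Import ring lra.
Set Implicit Arguments. Unset Strict Implicit. Unset Printing Implicit Defensive.
Import Order.TTheory GRing.Theory Num.Theory.
Import numFieldNormedType.Exports.
Local Open Scope classical_set_scope.
Local Open Scope ring_scope.

Section Fcwm.
Variables (R : realType) (N : nat) (f : ('I_N -> R) -> R).
Hypothesis hf : in_Fcwm f.

Lemma f_ge0 a : nonneg_vec a -> 0 <= f a.
Proof. by case: hf => h _; apply: h. Qed.

Lemma f_mono a b : nonneg_vec a -> nonneg_vec b -> (forall i, a i <= b i) -> f a <= f b.
Proof. by case: hf => _ [_ [h _]]; apply: h. Qed.

Lemma f_conv a b (t : R) : nonneg_vec a -> nonneg_vec b -> 0 <= t -> t <= 1 ->
  f (fun i => t * a i + (1 - t) * b i) <= t * f a + (1 - t) * f b.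
Proof. by case: hf => _ [h _]; apply: h. Qed.

Lemma f_smono a b : nonneg_vec a -> nonneg_vec b -> (forall i, a i < b i) -> f a < f b.
Proof. by case: hf => _ [_ [_ h]]; apply: h. Qed.

Lemma f_step a b (d : R) : nonneg_vec a -> nonneg_vec b -> 0 <= d -> d <= 1 ->
  (forall i, b i <= a i + d) -> f b <= f a + d * f (fun i => a i + 1).
Proof.
move=> na nb d0 d1 hb.
have na1 : nonneg_vec (fun i => a i + 1) by move=> i /=; have := na i; lra.
have nad : nonneg_vec (fun i => a i + d) by move=> i /=; have := na i; lra.
apply: (le_trans (f_mono nb nad hb)).
have -> : (fun i => a i + d) = (fun i => d * (a i + 1) + (1 - d) * a i).
  by apply: funext => i; lra.
apply: (le_trans (f_conv na1 na d0 d1)).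
have := f_ge0 na; have := f_ge0 na1; nra.
Qed.

Lemma f_coercive b (t : R) : nonneg_vec b -> 1 <= t -> (forall i, t <= b i) ->
  t * (f (fun _ => 1) - f (fun _ => 0)) <= f b.
Proof.
move=> nb t1 tb.
have n0 : nonneg_vec (fun _ : 'I_N => (0:R)) by move=> i.
have nt : nonneg_vec (fun _ : 'I_N => t) by move=> i /=; lra.
have ft : f (fun _ => t) <= f b by apply: f_mono.
have t0 : 0 < t by lra.
have st : t^-1 * t = 1 by rewrite mulVf // gt_eqF.
have s0 : 0 < t^-1 by rewrite invr_gt0.
have s1 : t^-1 <= 1 by nra.
have := f_conv nt n0 (ltW s0) s1.
have -> : (fun i : 'I_N => t^-1 * t + (1 - t^-1) * 0) = (fun _ => 1).
  by apply: funext => i; rewrite st; lra.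
move=> h; have := ler_wpM2l (ltW t0) h.
rewrite mulrDr !mulrA mulrBr mulr1 [t * t^-1]mulrC st mul1r.
have := f_ge0 n0; nra.
Qed.

End Fcwm.
Section HBsec.
Variables (R : realType) (V : lmodType R) (p : V -> R).
Hypotheses (psub : forall u v, p (u + v) <= p u + p v)
  (phom : forall (t : R) u, 0 < t -> p (t *: u) = t * p u).

Definition good (G : set (V * R)) :=
 [/\ G (0,0), (forall v a b, G (v,a) -> G (v,b) -> a = b),
     (forall (s : R) v a w b, G (v,a) -> G (w,b) -> G (s *: v + w, s * a + b)) &
     (forall v a, G (v,a) -> a <= p v)].

Lemma good_scale G s v a : good G -> G (v, a) -> G (s *: v, s * a).
Proof.
case=> G0 _ Gc _ Gva.
by have := Gc s v a 0 0 Gva G0; rewrite !addr0.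
Qed.

Lemma good_ext G v0 : good G -> ~ (exists a, G (v0,a)) ->
  exists G', [/\ good G', G `<=` G' & exists c, G' (v0, c)].
Proof.
move=> gG nv0; have gG' := gG; case: gG' => G00 Gfun Gc Gb.
pose S := [set y | exists d a, G (d,a) /\ y = a - p (d - v0)].
have key d a d2 a2 : G (d,a) -> G (d2,a2) -> a - p (d - v0) <= p (d2 + v0) - a2.
  move=> h1 h2; have := Gb _ _ (Gc 1 _ _ _ _ h1 h2); rewrite scale1r mul1r => hb.
  have : p (d + d2) <= p (d - v0) + p (d2 + v0).
    by have := psub (d - v0) (d2 + v0); rewrite addrACA addNr addr0.
  lra.
have Sne : S !=set0 by exists (0 - p (0 - v0)), 0, 0.
have hS : has_sup S.
  split => //; exists (p (0 + v0) - 0) => y [d [a [h ->]]]; exact: key.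
pose c := sup S.
have c_ge d a : G (d,a) -> a - p (d - v0) <= c.
  by move=> h; apply: sup_upper_bound => //; exists d, a.
have c_le d a : G (d,a) -> c <= p (d + v0) - a.
  move=> h; apply: ge_sup => // y [d1 [a1 [h1 ->]]]; exact: key.
pose G' := [set z | exists d a t, G (d,a) /\ z = (d + t *: v0, a + t * c)].
exists G'; split.
- split.
  + by exists 0, 0, 0; split => //; rewrite scale0r mul0r !addr0.
  + move=> v a b [d [a1 [t [h1 [e1 e2]]]]] [d' [a1' [t' [h2 [e3 e4]]]]].
    have [tt|ntt] := eqVneq t t'.
      subst t'; move: e3; rewrite e1 => /addIr dd; subst d'.
      by rewrite e2 e4 (Gfun _ _ _ h1 h2).
    exfalso; apply: nv0.
    have h3 := Gc (-1) _ _ _ _ h1 h2.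
    have e5 : (-1) *: d + d' = (t - t') *: v0.
      have -> : d' = d + t *: v0 - t' *: v0 by rewrite -e1 e3 addrK.
      by rewrite scaleN1r scalerBl addrA addKr.
    rewrite e5 in h3; have := good_scale ((t - t')^-1) gG h3.
    rewrite scalerA mulVf ?scale1r; last by rewrite subr_eq0.
    by move=> h; eexists; exact: h.
  + move=> s v a w b [d [a1 [t [h1 [-> ->]]]]] [d' [a1' [t' [h2 [-> ->]]]]].
    exists (s *: d + d'), (s * a1 + a1'), (s * t + t'); split; first exact: Gc.
    congr pair; last by ring.
    by rewrite scalerDr scalerA scalerDl addrACA.
  + move=> v a [d [a1 [t [h1 [-> ->]]]]].
    have [t0|t0|->] := ltgtP t 0; last by rewrite scale0r mul0r !addr0; exact: Gb.
    * have nt : 0 < - t by rewrite oppr_gt0.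
      have st : (- t)^-1 * (- t) = 1 by rewrite mulVf // gt_eqF.
      have h2 := good_scale ((- t)^-1) gG h1.
      have := c_ge _ _ h2.
      have -> : d + t *: v0 = (- t) *: ((- t)^-1 *: d - v0).
        by rewrite scalerBr scalerA mulfV ?gt_eqF // scale1r scaleNr opprK.
      rewrite phom //.
      set P := p _.
      move=> h; have := ler_wpM2l (ltW nt) h.
      rewrite mulrBr mulrA [- t * _]mulrC st mul1r; lra.
    * have st : t^-1 * t = 1 by rewrite mulVf // gt_eqF.
      have h2 := good_scale (t^-1) gG h1.
      have := c_le _ _ h2.
      have -> : d + t *: v0 = t *: (t^-1 *: d + v0).
        by rewrite scalerDr scalerA mulfV ?gt_eqF // scale1r.
      rewrite phom //.
      set P := p _.
      move=> h; have := ler_wpM2l (ltW t0) h.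
      rewrite mulrBr mulrA mulfV ?gt_eqF // mul1r; lra.
- by move=> [v a] h; exists v, a, 0; split => //; rewrite scale0r mul0r !addr0.
- by exists c, 0, 0, 1; split => //; rewrite scale1r mul1r !add0r.
Qed.

Lemma HB_ext G0 : good G0 -> exists g : V -> R,
  [/\ forall s v w, g (s *: v + w) = s * g v + g w,
      forall v, g v <= p v & forall v a, G0 (v, a) -> g v = a].
Proof.
move=> g0.
have [A [PA Amax]] : exists A, good (G0 `|` A) /\ forall B, A `<` B -> ~ good (G0 `|` B).
  apply: (@Zorn_bigcup _ (fun H => good (G0 `|` H))).
  move=> F FP Ftot.
  set U := G0 `|` _.
  have common z1 z2 : U z1 -> U z2 -> exists S, [/\ good S, S z1, S z2 & S `<=` U].
    have sub H : F H -> G0 `|` H `<=` U.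
      by move=> FH z [h|h]; [left|right; exists H].
    move=> [h1|[H1 FH1 h1]] [h2|[H2 FH2 h2]].
    - by exists G0; split => // z hz; left.
    - by exists (G0 `|` H2); split => //; [exact: FP|left|right|exact: sub].
    - by exists (G0 `|` H1); split => //; [exact: FP|right|left|exact: sub].
    - have [s12|s21] := Ftot _ _ FH1 FH2.
      + exists (G0 `|` H2); split.
        * exact: FP.
        * by right; apply: s12.
        * by right.
        * exact: sub.
      + exists (G0 `|` H1); split.
        * exact: FP.
        * by right.
        * by right; apply: s21.
        * exact: sub.
  split.
  - by left; case: g0.
  - move=> v a b h1 h2; have [S [[_ Sf _ _] s1 s2 _]] := common _ _ h1 h2; exact: Sf s1 s2.
  - move=> s v a w b h1 h2; have [S [[_ _ Sc _] s1 s2 sU]] := common _ _ h1 h2.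
    exact/sU/Sc.
  - move=> v a h1; have [S [[_ _ _ Sb] s1 _ _]] := common _ _ h1 h1; exact: Sb.
have full v : exists a, (G0 `|` A) (v, a).
  apply: contrapT => nv.
  have [G' [gG' sub [c Gc]]] := good_ext PA nv.
  apply: (Amax G').
    split; first by move=> z hz; apply: sub; right.
    by move=> h; apply: nv; exists c; right; exact: h.
  by rewrite setUidr // => z hz; apply: sub; left.
have [g hg] := choice full.
case: PA => _ Gf Gc Gb.
exists g; split.
- move=> s v w; apply: Gf (hg _) _; exact: Gc.
- by move=> v; exact: Gb.
- by move=> v a h; apply: Gf (hg _) _; left.
Qed.

End HBsec.
Section Sep.
Variables (R : realType) (X : normedModType R).

Lemma separation (C : set X) (x c0 : X) (r : R) :
  C c0 -> (forall u v (t : R), C u -> C v -> 0 <= t -> t <= 1 -> C (t *: u + (1 - t) *: v)) ->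
  0 < r -> (forall c, C c -> r <= `|x - c|) ->
  exists (g : X -> R) (eta : R), cont_lin_functional g /\ 0 < eta /\
    forall c, C c -> g c <= g x - eta.
Proof.
move=> Cc0 Cconv r0 Cfar.
pose A v := exists c w, [/\ C c, `|w| < r & v + c0 = c + w].
have Aconv u v (t : R) : A u -> A v -> 0 <= t -> t <= 1 -> A (t *: u + (1 - t) *: v).
  move=> [c1 [w1 [C1 n1 e1]]] [c2 [w2 [C2 n2 e2]]] t0 t1.
  exists (t *: c1 + (1 - t) *: c2), (t *: w1 + (1 - t) *: w2); split.
  - exact: Cconv.
  - apply: (le_lt_trans (ler_normD _ _)); rewrite !normrZ !ger0_norm ?subr_ge0 //.
    have [->|tp] := eqVneq t 0.
      by rewrite mul0r add0r subr0 mul1r.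
    have tp' : 0 < t by rewrite lt_def tp t0.
    have ht : 0 <= 1 - t by rewrite subr_ge0.
    have := ler_wpM2l ht (ltW n2).
    have : t * `|w1| < t * r by rewrite ltr_pM2l.
    lra.
  - have -> : t *: u + (1 - t) *: v + c0 = t *: (u + c0) + (1 - t) *: (v + c0).
      by rewrite !scalerDr addrACA -scalerDl subrKC scale1r.
    by rewrite e1 e2 !scalerDr addrACA.
have A0 : A 0 by exists c0, 0; split => //; rewrite ?normr0 // add0r addr0.
pose S v := [set l : R | 0 < l /\ A (l^-1 *: v)].
pose p v := inf (S v).
have memS v l : 0 < l -> `|v| < r * l -> S v l.
  move=> l0 h; split => //; exists c0, (l^-1 *: v); split => //.
    rewrite normrZ gtr0_norm ?invr_gt0 // mulrC.
    by rewrite ltr_pdivrMr // mulrC.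
  by rewrite addrC.
have Sne v : S v !=set0.
  exists (`|v| / r + 1); apply: memS; first by apply: ltr_wpDl => //; rewrite divr_ge0 // ltW.
  by rewrite mulrDr mulr1 mulrC divfK ?gt_eqF // ltrDl.
have Slb v : lbound (S v) 0 by move=> l [l0 _]; exact: ltW.
have hinf v : has_inf (S v) by split => //; exists 0; exact: Slb.
have p_ge0 v : 0 <= p v by apply: lb_le_inf.
have p_le v l : S v l -> p v <= l by move=> h; apply: ge_inf => //; exists 0.
have p_norm v : p v <= `|v| / r.
  apply/ler_addgt0Pr => e e0; apply: p_le; apply: memS.
    by apply: ltr_wpDl => //; rewrite divr_ge0 // ltW.
  by rewrite mulrDr mulrC divfK ?gt_eqF // ltrDl mulr_gt0.
have p_sub u v : p (u + v) <= p u + p v.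
  apply/ler_addgt0Pr => e e0.
  have e2 : 0 < e / 2 by rewrite divr_gt0.
  have [l1 [l10 A1] h1] := inf_adherent e2 (hinf u).
  have [l2 [l20 A2] h2] := inf_adherent e2 (hinf v).
  have : p (u + v) <= l1 + l2.
    apply: p_le; split; first by rewrite addr_gt0.
    have l12 : 0 < l1 + l2 by rewrite addr_gt0.
    have := Aconv _ _ (l1 / (l1 + l2)) A1 A2.
    have -> : l1 / (l1 + l2) *: (l1^-1 *: u) + (1 - l1 / (l1 + l2)) *: (l2^-1 *: v)
       = (l1 + l2)^-1 *: (u + v).
      have nl1 : l1 != 0 by rewrite gt_eqF.
      have nl2 : l2 != 0 by rewrite gt_eqF.
      have nl12 : l1 + l2 != 0 by rewrite gt_eqF.
      rewrite !scalerA scalerDr; congr (_ *: _ + _ *: _); field; by rewrite ?nl1 ?nl2 ?nl12.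
    apply; first by rewrite divr_ge0 // ltW.
    by rewrite ler_pdivrMr // mul1r lerDl ltW.
  lra.
have p_hom1 (t : R) u : 0 < t -> p (t *: u) <= t * p u.
  move=> t0; rewrite -(ler_pdivrMl _ _ t0); apply: lb_le_inf => // l [l0 Al].
  rewrite (ler_pdivrMl _ _ t0); apply: p_le; split; first by rewrite mulr_gt0.
  rewrite scalerA; have -> : (t * l)^-1 * t = l^-1 by field; apply/andP; rewrite !gt_eqF.
  done.
have p_hom (t : R) u : 0 < t -> p (t *: u) = t * p u.
  move=> t0; apply/le_anti; rewrite p_hom1 //=.
  rewrite -(ler_pdivlMl _ _ t0); have := p_hom1 (t^-1) (t *: u).
  by rewrite scalerA mulVf ?gt_eqF // scale1r; apply; rewrite invr_gt0.
have pA v : A v -> p v <= 1 by move=> h; apply: p_le; split => //; rewrite invr1 scale1r.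
pose z0 := x - c0.
have nAz0 : ~ A z0.
  move=> [c [w [Cc nw e]]]; move: e; rewrite /z0 subrK => e.
  have := Cfar _ Cc; rewrite e addrC addKr; lra.
have z0n0 : z0 != 0 by apply/eqP => e; apply: nAz0; rewrite e.
have pz0 : 1 <= p z0.
  apply: lb_le_inf => // l [l0 Al]; rewrite leNgt; apply/negP => l1.
  apply: nAz0; have := Aconv _ _ l Al A0 (ltW l0) (ltW l1).
  by rewrite scalerA mulfV ?gt_eqF // scale1r scaler0 addr0.
pose G0 := [set z : X * R | exists t : R, z = (t *: z0, t * p z0)].
have gG0 : good p G0.
  split.
  - by exists 0; rewrite scale0r mul0r.
  - move=> v a b [t [-> ->]] [t' [e ->]].
    move/eqP: e; rewrite -subr_eq0 -scalerBl scaler_eq0 (negbTE z0n0) orbF subr_eq0.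
    by move/eqP ->.
  - move=> s v a w b [t [-> ->]] [t' [-> ->]]; exists (s * t + t').
    by rewrite scalerDl scalerA mulrDl mulrA.
  - move=> v a [t [-> ->]].
    have [t0|t0|->] := ltgtP t 0.
    + by apply: (le_trans _ (p_ge0 _)); have := pz0; nra.
    + by rewrite p_hom.
    + by rewrite mul0r.
have psub : forall u v, p (u + v) <= p u + p v by [].
have [g [glin gp gG]] := HB_ext psub p_hom gG0.
have gadd u v : g (u + v) = g u + g v by rewrite -[u]scale1r glin mul1r scale1r.
have g0 : g 0 = 0 by have := gadd 0 0; rewrite addr0; lra.
have gN v : g (- v) = - g v.
  by have := glin (-1) v 0; rewrite addr0 g0 addr0 scaleN1r mulN1r.
have gsc (s : R) v : g (s *: v) = s * g v by have := glin s v 0; rewrite addr0 g0 addr0.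
have gB u v : g (u - v) = g u - g v by rewrite gadd gN.
have gz0 : g z0 = p z0 by have := gG (1 *: z0) (1 * p z0); rewrite scale1r mul1r; apply; exists 1; rewrite scale1r mul1r.
have gnorm v : `|g v| <= `|v| / r.
  rewrite ler_norml; apply/andP; split; last exact: le_trans (gp v) (p_norm v).
  rewrite lerNl -gN; apply: le_trans (gp _) _; apply: le_trans (p_norm _) _.
  by rewrite normrN.
pose eta := (r / 2) / `|z0|.
have nz0 : 0 < `|z0| by rewrite normr_gt0.
have eta0 : 0 < eta by rewrite /eta !divr_gt0.
exists g, eta; split; last split => //.
  split; first by move=> a u v; rewrite glin.
  move=> v; apply/cvgrPdist_lt => e e0.
  rewrite nearE; apply/nbhs_ballP; exists (r * e) => /=; first by rewrite mulr_gt0.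
  move=> w; rewrite -ball_normE /= => h.
  rewrite -gB; apply: le_lt_trans (gnorm _) _.
  by rewrite ltr_pdivrMr // mulrC.
move=> c Cc.
pose w := eta *: z0.
have nw : `|w| < r.
  rewrite /w normrZ gtr0_norm // /eta divfK ?gt_eqF //.
  lra.
have Aw : A (c - c0 + w) by exists c, w; split => //; rewrite addrAC subrK.
have := le_trans (gp _) (pA _ Aw).
rewrite !gadd gN /w gsc gz0.
have : g z0 = g x - g c0 by rewrite gB.
rewrite gz0.
have := pz0.
nra.
Qed.

End Sep.
Section Main.
Variables (R : realType) (X : normedModType R) (Y : set X) (N : nat)
  (f : ('I_N -> R) -> R).
Hypotheses (hY : closed_subspace Y) (hf : in_Fcwm f) (N0 : (0 < N)%N).

Let i0 : 'I_N := Ordinal N0.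

Definition dvec (F : 'I_N -> X) (y : X) := fun i => `|y - F i|.

Lemma dvec_nn (F : 'I_N -> X) (y : X) : nonneg_vec (dvec F y).
Proof. by move=> i; rewrite /dvec normr_ge0. Qed.

Lemma nn_add1 (a : 'I_N -> R) (c : R) : nonneg_vec a -> 0 <= c -> nonneg_vec (fun i => a i + c).
Proof. by move=> h c0 i; rewrite addr_ge0. Qed.

Lemma nn_cst (c : R) : 0 <= c -> nonneg_vec (fun _ : 'I_N => c).
Proof. by move=> h i. Qed.

Lemma rf_ge0 (F : 'I_N -> X) (y : X) : 0 <= r_f f F y.
Proof. exact: (f_ge0 hf (dvec_nn F y)). Qed.

Lemma Y0 : Y 0. Proof. by case: hY => _ []. Qed.

Lemma rad_has_inf (F : 'I_N -> X) : has_inf [set r_f f F y | y in Y].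
Proof.
split; first by exists (r_f f F 0), 0 => //; exact: Y0.
by exists 0 => _ [y _ <-]; exact: rf_ge0.
Qed.

Lemma rad_le (F : 'I_N -> X) (y : X) : Y y -> Defs.rad Y f F <= r_f f F y.
Proof. by move=> Yy; apply: ge_inf; [case: (rad_has_inf F)|exists y]. Qed.

Lemma rad_adh (F : 'I_N -> X) (e : R) : 0 < e -> exists z, Y z /\ r_f f F z < Defs.rad Y f F + e.
Proof.
move=> e0; have [_ [z Yz <-] h] := inf_adherent e0 (rad_has_inf F).
by exists z.
Qed.

Lemma dist_ge (F G : 'I_N -> X) i : `|F i - G i| <= dist_enum F G.
Proof. by rewrite /dist_enum; apply: (le_bigmax (0 : R) (fun i => `|F i - G i|) i). Qed.

Lemma dist_ge0 (F G : 'I_N -> X) : 0 <= dist_enum F G.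
Proof. exact: le_trans (normr_ge0 _) (dist_ge F G i0). Qed.

Lemma dist_lt (F G : 'I_N -> X) (r : R) : 0 < r -> (forall i, `|F i - G i| < r) ->
  dist_enum F G < r.
Proof. by move=> r0 h; rewrite /dist_enum; apply: bigmax_lt. Qed.

Lemma rstep (F G : 'I_N -> X) y (d : R) : 0 <= d -> d <= 1 ->
  (forall i, `|F i - G i| <= d) ->
  r_f f G y <= r_f f F y + d * f (fun i => `|y - F i| + 1).
Proof.
move=> d0 d1 h; apply: (f_step hf (dvec_nn F y) (dvec_nn G y) d0 d1) => i.
rewrite /dvec; apply: le_trans (ler_distD (F i) y (G i)) _.
by rewrite lerD2l.
Qed.

Lemma key_seq (F : 'I_N -> X) (Gs : nat -> ('I_N -> X)) (ys : nat -> X) :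
  (forall n, dist_enum F (Gs n) < n.+1%:R^-1) -> (forall n, Cent Y f (Gs n) (ys n)) ->
  forall e, 0 < e -> exists n0, forall n, (n0 <= n)%N -> r_f f F (ys n) <= Defs.rad Y f F + e.
Proof.
move=> hG hC e e0.
have e2 : 0 < e / 2 by rewrite divr_gt0.
have [z [Yz hz]] := rad_adh F e2.
pose K1 := f (fun i => `|z - F i| + 1).
have K10 : 0 <= K1 by apply: (f_ge0 hf); apply: nn_add1 => //; exact: dvec_nn.
pose B := r_f f F z + K1.
have B0 : 0 <= B by rewrite addr_ge0 // rf_ge0.
pose c1c0 := f (fun _ => 1) - f (fun _ => 0).
have c10 : 0 < c1c0.
  by rewrite subr_gt0; apply: (f_smono hf) => //; apply: nn_cst.
pose D := dist_enum (fun _ => F i0) F.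
pose M := 1 + B / c1c0 + D + 1 + D + 1.
pose K2 := f (fun _ => M + 1).
have D0 : 0 <= D by apply: dist_ge0.
have M0 : 0 <= M by rewrite /M; have := divr_ge0 B0 (ltW c10); lra.
have K20 : 0 <= K2 by apply: (f_ge0 hf); apply: nn_cst; lra.
have hbound n : r_f f F (ys n) <= r_f f F z + dist_enum F (Gs n) * (K1 + K2).
  have dn0 := dist_ge0 F (Gs n).
  have dn1 : dist_enum F (Gs n) <= 1.
    apply: ltW; apply: (lt_le_trans (hG n)); rewrite invr_le1 //.
      by rewrite ler1n.
    by rewrite unitfE pnatr_eq0.
  set d := dist_enum F (Gs n); rewrite -/d in dn0 dn1.
  have hFG i : `|F i - Gs n i| <= d by apply: dist_ge.
  have hGF i : `|Gs n i - F i| <= d by rewrite distrC.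
  have [Yy ry] := hC n.
  have radG : Defs.rad Y f (Gs n) <= B.
    apply: le_trans (rad_le _ Yz) _.
    apply: le_trans (rstep z dn0 dn1 hFG) _.
    rewrite /B lerD2l; rewrite -[X in _ <= X]mul1r; apply: ler_wpM2r => //.
  have hyG j : `|ys n - Gs n j| <= M.
    pose t := `|ys n - F i0| - D - 1.
    have tle : forall j, t <= `|ys n - Gs n j|.
      move=> k; rewrite /t.
      have h1 := ler_distD (Gs n k) (ys n) (F i0).
      have h2 := ler_distD (F k) (Gs n k) (F i0).
      have h3 : `|F k - F i0| <= D by rewrite distrC; exact: (dist_ge (fun _ => F i0) F k).
      have := hGF k; lra.
    have tT : t <= 1 + B / c1c0.
      have [t1|t1] := lerP 1 t; last by have := divr_ge0 B0 (ltW c10); lra.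
      have := f_coercive hf (dvec_nn (Gs n) (ys n)) t1 tle.
      rewrite -/c1c0 => h.
      have : t * c1c0 <= B by apply: le_trans h _; apply: le_trans radG; rewrite -ry; exact: lexx.
      rewrite -ler_pdivlMr //; lra.
    have h1 := ler_distD (F i0) (ys n) (Gs n j).
    have h2 := ler_distD (F j) (F i0) (Gs n j).
    have h3 : `|F i0 - F j| <= D by exact: (dist_ge (fun _ => F i0) F j).
    have := hFG j; rewrite /t in tT; rewrite /M; lra.
  apply: le_trans (rstep (ys n) dn0 dn1 hGF) _.
  have fK2 : f (fun i => `|ys n - Gs n i| + 1) <= K2.
    apply: (f_mono hf); first by apply: nn_add1 => //; exact: dvec_nn.
      apply: nn_cst; have := hyG i0; have := normr_ge0 (ys n - Gs n i0); lra.
    by move=> i /=; rewrite lerD2r.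
  rewrite ry.
  have : Defs.rad Y f (Gs n) <= r_f f F z + d * K1.
    apply: le_trans (rad_le _ Yz) _; exact: rstep.
  have := ler_wpM2l dn0 fK2.
  rewrite mulrDr; lra.
pose K := K1 + K2.
pose n0 := Num.Def.trunc (K / (e / 2)).
exists n0 => n hn.
have hK := truncnS_gt (K / (e / 2)).
have hnn : (n0.+1%:R : R) <= n.+1%:R by rewrite ler_nat.
have dlt := hG n.
have dn0 := dist_ge0 F (Gs n).
have n1pos : (0 : R) < n.+1%:R by rewrite ltr0n.
have : dist_enum F (Gs n) * n.+1%:R < 1.
  by rewrite -ltr_pdivlMr // div1r.
rewrite -/n0 in hK.
have : K < e / 2 * n0.+1%:R by rewrite -ltr_pdivrMl // mulrC.
have K0 : 0 <= K by rewrite addr_ge0.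
have := hbound n; rewrite -/K.
move=> hb h1 h2.
set d := dist_enum F (Gs n) in hb h2 dn0 *.
have a1 : d * K <= d * (e / 2 * n0.+1%:R) by apply: ler_wpM2l => //; exact: ltW.
have a2 : e / 2 * n0.+1%:R <= e / 2 * n.+1%:R by apply: ler_wpM2l => //; exact: ltW.
have a3 : d * (e / 2 * n0.+1%:R) <= d * (e / 2 * n.+1%:R) by apply: ler_wpM2l.
have a4 : d * (e / 2 * n.+1%:R) = e / 2 * (d * n.+1%:R) by ring.
have a5 : e / 2 * (d * n.+1%:R) <= e / 2 by rewrite -[X in _ <= X]mulr1; apply: ler_wpM2l; [exact: ltW|exact: ltW].
lra.
Qed.

Lemma C_open (F : 'I_N -> X) (c : R) : open (~` [set v | Y v /\ r_f f F v <= c]).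
Proof.
rewrite openE => v /= nv; rewrite /interior.
case: (pselect (Y v)) => Yv; last first.
  have oY := closed_openC hY.1; move: oY; rewrite openE => /(_ v Yv) oY.
  by apply: filterS oY => w nYw [Yw _].
have rv : c < r_f f F v by rewrite ltNge; apply/negP => h; apply: nv.
pose K := f (fun i => `|v - F i| + 2).
have K0 : 0 <= K by apply: (f_ge0 hf); apply: nn_add1 => //; exact: dvec_nn.
pose d := Num.min 1 ((r_f f F v - c) / (K + 1)).
have K1 : 0 < K + 1 by lra.
have d0 : 0 < d by rewrite lt_min ltr01 /= divr_gt0 // subr_gt0.
have d1 : d <= 1 by rewrite ge_min lexx.
have d2 : d * (K + 1) <= r_f f F v - c.
  by rewrite -ler_pdivlMr // ge_min lexx orbT.
apply/nbhs_ballP; exists d => // w; rewrite -ball_normE /= => hw [Yw rw].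
have h1 : r_f f F v <= r_f f F w + d * f (fun i => `|w - F i| + 1).
  apply: (f_step hf (dvec_nn F w) (dvec_nn F v) (ltW d0) d1) => i.
  rewrite /dvec; apply: le_trans (ler_distD w v (F i)) _.
  by rewrite addrC lerD2l ltW.
have h2 : f (fun i => `|w - F i| + 1) <= K.
  apply: (f_mono hf); first by apply: nn_add1 => //; exact: dvec_nn.
    by apply: nn_add1 => //; exact: dvec_nn.
  move=> i /=; have := ler_distD v w (F i); rewrite distrC in hw; lra.
have := ler_wpM2l (ltW d0) h2.
nra.
Qed.

Lemma C_conv (F : 'I_N -> X) (c : R) u v (t : R) :
  Y u /\ r_f f F u <= c -> Y v /\ r_f f F v <= c -> 0 <= t -> t <= 1 ->
  Y (t *: u + (1 - t) *: v) /\ r_f f F (t *: u + (1 - t) *: v) <= c.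
Proof.
move=> [Yu ru] [Yv rv] t0 t1; have t1' : 0 <= 1 - t by rewrite subr_ge0.
have [_ [Y0' Yc]] := hY; split.
  by apply: (Yc) => //; have := Yc (1 - t) v 0 Yv Y0'; rewrite addr0.
have h1 : r_f f F (t *: u + (1 - t) *: v) <=
    f (fun i => t * `|u - F i| + (1 - t) * `|v - F i|).
  apply: (f_mono hf); first exact: dvec_nn.
    by move=> i; rewrite addr_ge0 // mulr_ge0.
  move=> i.
  have -> : t *: u + (1 - t) *: v - F i = t *: (u - F i) + (1 - t) *: (v - F i).
    by rewrite !scalerBr addrACA -opprD -scalerDl subrKC scale1r.
  apply: le_trans (ler_normD _ _) _.
  by rewrite !normrZ !ger0_norm.
have h2 : f (fun i => t * `|u - F i| + (1 - t) * `|v - F i|) <=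
    t * r_f f F u + (1 - t) * r_f f F v.
  exact: (f_conv hf (dvec_nn F u) (dvec_nn F v) t0 t1).
have := ler_wpM2l t0 ru; have := ler_wpM2l t1' rv.
lra.
Qed.

End Main.

Lemma tau_closed (R : realType) (X : normedModType R) (tau : tau_kind) (C : set X)
    (u : nat -> X) (x : X) :
  open (~` C) ->
  (forall a b (t : R), C a -> C b -> 0 <= t -> t <= 1 -> C (t *: a + (1 - t) *: b)) ->
  (exists n0, forall n, (n0 <= n)%N -> C (u n)) -> tau_cvg tau u x -> C x.
Proof.
move=> oC cC [n0 hn] hx; apply: contrapT => nCx.
case: tau hx => hx.
  have [n1 h1] := hx _ oC nCx.
  by apply: (h1 (maxn n0 n1)); [rewrite leq_maxr | apply: hn; rewrite leq_maxl].
have : nbhs x (~` C) by move: oC; rewrite openE => /(_ x nCx).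
move/nbhs_ballP => [r /= r0 hr].
have far c : C c -> r <= `|x - c|.
  move=> Cc; rewrite leNgt; apply/negP => h; apply: (hr c) => //.
  by rewrite -ball_normE.
have [g [eta [gl [eta0 hg]]]] := separation (hn n0 (leqnn n0)) cC r0 far.
pose W := [set z | `|g z - g x| < eta].
have oW : tau_open WeakTop W.
  move=> z /= hz; exists 1%N, (fun _ => g), (eta - `|g z - g x|).
  split; first by move=> i.
  split; first by rewrite subr_gt0.
  move=> y /(_ ord0) hy; rewrite /W /=; have := ler_distD (g z) (g y) (g x); lra.
have Wx : W x by rewrite /W /= subrr normr0.
have [n1 h1] := hx W oW Wx.
have := h1 (maxn n0 n1) (leq_maxr _ _).
have := hg _ (hn (maxn n0 n1) (leq_maxl _ _)).
rewrite /W /= ltr_norml => ? /andP[? ?]; lra.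
Qed.


Theorem theorem4p5 (R : realType) (X : completeNormedModType R)
  (tau : tau_kind) (Y : set X) :
  closed_subspace Y -> SACP tau Y ->
  forall (N : nat) (f : ('I_N -> R) -> R), (0 < N)%N -> in_Fcwm f ->
    Cent_usc tau Y f.
Proof.
move=> hY hS N f N0 hf F eF W oW sub.
case: (pselect (exists rho : R, 0 < rho /\ forall G, is_enum G ->
    dist_enum F G < rho -> Cent Y f G `<=` W)) => [[rho [rho0 hrho]]|nH].
  exists [set G | is_enum G /\ dist_enum F G < rho]; split; last split; last split.
  - move=> G [eG dG]; exists (rho - dist_enum F G); split; first by rewrite subr_gt0.
    move=> G' eG' dGG'; split => //; apply: dist_lt => // i.
    apply: le_lt_trans (ler_distD (G i) (F i) (G' i)) _.
    have := dist_ge F G i; have := dist_ge G G' i; lra.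
  - by split => //; apply: dist_lt => // i; rewrite subrr normr0.
  - by move=> G [].
  - by move=> G [eG dG]; apply: hrho.
have hn n : exists q : ('I_N -> X) * X, [/\ is_enum q.1,
    dist_enum F q.1 < n.+1%:R^-1, Cent Y f q.1 q.2 & ~ W q.2].
  apply: contrapT => nq; apply: nH; exists (n.+1%:R^-1).
  split; first by rewrite invr_gt0 ltr0n.
  move=> G eG dG y Cy; apply: contrapT => nWy; apply: nq; by exists (G, y); split.
have [q hq] := choice hn.
pose Gs n := (q n).1.
pose ys n := (q n).2.
have hG n : dist_enum F (Gs n) < n.+1%:R^-1 by case: (hq n).
have hC n : Cent Y f (Gs n) (ys n) by case: (hq n).
have hW n : ~ W (ys n) by case: (hq n).
have hlim := key_seq hY hf N0 hG hC.
have hcvg : (fun n => r_f f F (ys n)) @ \oo --> Defs.rad Y f F.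
  apply/cvgrPdist_le => e e0; have [n0 h] := hlim e e0.
  exists n0 => // n /= hn0.
  have h1 := rad_le hY hf F (hC n).1; have := h n hn0.
  rewrite distrC ger0_norm ?subr_ge0 //; lra.
have [phi [x [phim hx]]] := hS N F f ys N0 eF hf (fun n => (hC n).1) hcvg.
have phige n : (n <= phi n)%N.
  elim: n => [//|n IH]; exact: leq_ltn_trans IH (phim _ _ (ltnSn n)).
have hCe e : 0 < e -> Y x /\ r_f f F x <= Defs.rad Y f F + e.
  move=> e0; apply: (tau_closed (C_open hY hf F _) _ _ hx).
  - by move=> a b t ha hb t0 t1; exact: C_conv.
  - have [n0 h] := hlim e e0; exists n0 => n hn1; split; first exact: (hC _).1.
    by apply: h; exact: leq_trans hn1 (phige n).
have Cx : Cent Y f F x.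
  have [Yx _] := hCe 1 ltr01.
  split => //.
  apply/le_anti/andP; split; last exact: (rad_le hY hf F Yx).
  by apply/ler_addgt0Pr => e e0; have [] := hCe e e0.
have [n1 h1] := hx W oW (sub _ Cx).
by exfalso; apply: (hW (phi n1)); exact: (h1 n1 (leqnn n1)).
Qed.
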